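(* Let $n\geq0$ and $F\in\mathbf{F}(n)$. Then $f_F=\sum_{G\in\mathbf{F}(n),\,G\leq m(F)}\mu(G,m(F))\,G$.
   Context: Let $K$ be a field. Planar rooted trees have their children linearly ordered left to right; a planar forest is a finite, possibly empty, sequence $t_1\cdots t_n$ of planar rooted trees ($1$ = empty forest); $\mathbf{F}(n)$ is the (finite) set of planar forests with $n$ vertices. $\mathcal{H}$ is the free associative unital $K$-algebra on planar rooted trees, with basis the planar forests and product concatenation. $B^+(F)$ is the tree obtained by grafting the trees of $F$ on a new common root; $\varepsilon(F)=\delta_{F,1}$. $\Delta$ is the unique linear map with $\Delta(1)=1\otimes1$, $\Delta(xy)=(x\otimes1)\Delta(y)+\Delta(x)(1\otimes y)-x\otimes y$, $\Delta(B^+(x))=B^+(x)\otimes 1+(\mathrm{Id}\otimes B^+)\Delta(x)$. $\gamma$ is linear with $\gamma(t_1\cdots t_n)=\delta_{t_1,\bullet}t_2\cdots t_n$ ($\bullet$ the one-vertex tree), $\gamma(1)=0$. $\langle-,-\rangle$ is the unique bilinear form with $\langle1,x\rangle=\varepsilon(x)$, $\langle xy,z\rangle=\langle y\otimes x,\Delta(z)\rangle$ (with $\langle a\otimes b,c\otimes d\rangle=\langle a,c\rangle\langle b,d\rangle$), $\langle B^+(x),y\rangle=\langle x,\gamma(y)\rangle$; it is non-degenerate and forests of different weights are orthogonal; $(f_F)$ is the dual basis: $\langle f_F,G\rangle=\delta_{F,G}$ for all forests $G$. $m$ is the map on planar forests defined recursively by $m(1)=1$, $m(B^+(F_1)F_2)=B^+(m(F_2))m(F_1)$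 (it preserves the number of vertices). Order on forests: an admissible transformation chooses a vertex $s$ which is the leftmost child of its parent $u$; if $u$ is not a root, with parent $r$, the subtree rooted at $s$ is moved to become a child of $r$ immediately to the left of $u$; if $u$ is a root, the subtree rooted at $s$ becomes a new tree immediately to the left of the tree of $u$; everything else unchanged. $F\leq G$ iff $G$ is obtained from $F$ by a finite (possibly empty) sequence of admissible transformations; this is a partial order on each $\mathbf{F}(n)$. $\mu:\mathbf{F}(n)^2\to K$ is the Möbius function of the poset $(\mathbf{F}(n),\leq)$: $\mu(F,G)=0$ if $F\not\leq G$, and $\sum_{G:\,F\leq G\leq H}\mu(F,G)=\delta_{F,H}$ whenever $F\leq H$. *)

(* Defs.v *)
From HB Require Import structures.
From mathcomp Require Import all_boot all_order all_algebra.
From mathcomp Require Import finmap monalg.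
Set Implicit Arguments.
Unset Strict Implicit.
Unset Printing Implicit Defensive.
Import GRing.Theory.
Local Open Scope ring_scope.

(* Planar forests.  A planar forest is either the empty forest [fone]  *)
(* or [BF C R] = B^+(C) R : the planar tree whose root has the forest *)
(* of subtrees C (left to right), followed (on its right) by the       *)
(* forest R.  Every planar forest t_1 ... t_k has a unique such        *)
(* decomposition (t_1 = B^+(C), R = t_2 ... t_k).                      *)
Inductive forest : Type :=
| fone : forest
| BF : forest -> forest -> forest.

Fixpoint enc (F : forest) : GenTree.tree unit :=
  match F with
  | fone => GenTree.Leaf tt
  | BF A B => GenTree.Node 0 [:: enc A; enc B]
  end.
Fixpoint dec (t : GenTree.tree unit) : forest :=
  match t with
  | GenTree.Node _ [:: a; b] => BF (dec a) (dec b)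
  | _ => fone
  end.
Lemma encK : cancel enc dec. Proof. by elim=> //= A -> B ->. Qed.
HB.instance Definition _ := Countable.copy forest (can_type encK).

Fixpoint nv (F : forest) : nat :=
  match F with fone => 0%N | BF A B => (nv A + nv B).+1 end.

(* concatenation (the product of H on the basis) *)
Fixpoint fcat (F G : forest) : forest :=
  match F with fone => G | BF A B => BF A (fcat B G) end.

Definition Bplus (F : forest) : forest := BF F fone.

Definition dot : forest := Bplus fone.

(* gamma on the basis: gamma(t_1 ... t_k) = delta_{t_1, dot} t_2...t_k,
   gamma(1) = 0; [None] stands for 0. *)
Definition gammaF (G : forest) : option forest :=
  match G with BF fone G2 => Some G2 | _ => None end.

Fixpoint m (F : forest) : forest :=
  match F with fone => fone | BF F1 F2 => BF (m F2) (m F1) end.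

Section Hopf.
Variable R : fieldType.

Definition H := {malg R[forest]}.
Definition HH := {malg R[(forest * forest)%type]}.

(* Coproduct on the basis, from the defining rules
   Delta(1) = 1 (x) 1,
   Delta(t y) = (t (x) 1) Delta(y) + Delta(t) (1 (x) y) - t (x) y   (t a tree),
   Delta(B^+(x)) = B^+(x) (x) 1 + (Id (x) B^+) Delta(x). *)
Fixpoint DeltaF (F : forest) : HH :=
  match F with
  | fone => << (fone, fone) >>
  | BF A B =>
      let t := Bplus A in
      let Dt : HH := << (t, fone) >> +
        \sum_(p <- msupp (DeltaF A)) << (DeltaF A)@_p *g (p.1, Bplus p.2) >> in
      \sum_(p <- msupp (DeltaF B)) << (DeltaF B)@_p *g (fcat t p.1, p.2) >>
      + \sum_(p <- msupp Dt) << Dt@_p *g (p.1, fcat p.2 B) >>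
      - << (t, B) >>
  end.

Definition Delta (x : H) : HH := \sum_(F <- msupp x) x@_F *: DeltaF F.

(* The pairing <F, G> on basis forests, by recursion on F using
   <1, x> = eps(x), <B^+(x), y> = <x, gamma(y)>,
   <t y, z> = <y (x) t, Delta(z)>  (t the first tree of the forest). *)
Fixpoint pairF (F G : forest) {struct F} : R :=
  match F with
  | fone => (G == fone)%:R
  | BF A B =>
      let pt (X : forest) := if gammaF X is Some X2 then pairF A X2 else 0 in
      if B == fone then pt G
      else \sum_(p <- msupp (DeltaF G)) (DeltaF G)@_p * pairF B p.1 * pt p.2
  end.

Definition pairH (x : H) (G : forest) : R :=
  \sum_(F <- msupp x) x@_F * pairF F G.

End Hopf.

Fixpoint enumF (fuel n : nat) : seq forest :=
  match fuel with
  | 0 => if n == 0%N then [:: fone] else [::]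
  | fuel'.+1 =>
      if n is n'.+1 then
        flatten [seq [seq BF a b | a <- enumF fuel' k, b <- enumF fuel' (n' - k)]
                | k <- iota 0 n]
      else [:: fone]
  end.
Definition forests (n : nat) : seq forest := enumF n n.

Lemma nv_eq0 F : (nv F == 0%N) = (F == fone). Proof. by case: F. Qed.

Lemma mem_enumF fuel n G : (n <= fuel)%N -> (G \in enumF fuel n) = (nv G == n).
Proof.
elim: fuel n G => [|f IH] n G.
  by rewrite leqn0 => /eqP -> /=; rewrite inE nv_eq0.
case: n => [|n'] Hn; first by rewrite /= inE nv_eq0.
have -> : enumF f.+1 n'.+1 = flatten [seq [seq BF a b | a <- enumF f k,
  b <- enumF f (n' - k)] | k <- iota 0 n'.+1] by [].
apply/flattenP/idP.
  case=> s /mapP [k]; rewrite mem_iota add0n => /andP [_ Hk] -> /allpairsP.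
  case=> [[a b]] /= [Ha Hb ->].
  rewrite IH in Ha; last by rewrite -ltnS (leq_trans Hk).
  rewrite IH in Hb; last by rewrite (leq_trans (leq_subr _ _)).
  by rewrite /= (eqP Ha) (eqP Hb) subnKC // -ltnS.
case: G => // A B /eqP HAB0.
have HAB : (nv A + nv B)%N = n' by case: HAB0.
exists [seq BF a b | a <- enumF f (nv A), b <- enumF f (n' - nv A)].
  apply/mapP; exists (nv A) => //; rewrite mem_iota add0n ltnS -HAB leq_addr //.
apply/allpairsP; exists (A, B) => /=; split => //.
  by rewrite IH //; apply: (@leq_trans n'); rewrite // -HAB leq_addr.
rewrite -HAB addKn IH //; apply: (@leq_trans n'); rewrite // -HAB leq_addl.
by [].
Qed.

Lemma mem_forests n G : (G \in forests n) = (nv G == n).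
Proof. exact: mem_enumF. Qed.

Definition Fn (n : nat) : finType := seq_sub (forests n).

Lemma nv_m F : nv (m F) = nv F.
Proof. by elim: F => //= A IHA B IHB; rewrite IHA IHB addnC. Qed.

Lemma m_mem n (G : Fn n) : m (ssval G) \in forests n.
Proof. by rewrite mem_forests nv_m -mem_forests (ssvalP G). Qed.

Definition mFn n (G : Fn n) : Fn n := SeqSub (m_mem G).

(* Admissible transformations.  In the representation above, a vertex *)
(* s that is the leftmost child of its parent u corresponds to a       *)
(* sub-forest  X = BF (BF S0 C') R  (u = B^+(s C'), s = B^+(S), R the   *)
(* trees to the right of u among the children of u's parent, or among *)
(* the roots if u is a root).  Moving the subtree of s immediately to  *)
(* the left of u gives  BF S (BF C' R), everything else unchanged.     *)
Fixpoint adm_steps (F : forest) : seq forest :=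
  match F with
  | fone => [::]
  | BF A B =>
      (if A is BF S0 C' then [:: BF S0 (BF C' B)] else [::])
      ++ [seq BF A' B | A' <- adm_steps A]
      ++ [seq BF A B' | B' <- adm_steps B]
  end.

Definition adm (F G : forest) : bool := G \in adm_steps F.

Definition fle n (F G : Fn n) : bool :=
  connect (fun X Y : Fn n => adm (ssval X) (ssval Y)) F G.

(* Main.v *)
Require Import Defs.
From HB Require Import structures.
From mathcomp Require Import all_boot all_order all_algebra.
From mathcomp Require Import finmap monalg.
From mathcomp Require Import zify.
From Stdlib Require Import Classical_Prop.

Module Aux.
Set Implicit Arguments. Unset Strict Implicit. Unset Printing Implicit Defensive.
Import GRing.Theory.

Inductive le : forest -> forest -> Prop :=
| le_refl X : le X X
| le_step X Y Z : le X Y -> adm Y Z -> le X Z.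

Lemma adm_nv_all Y : all (fun Z => nv Z == nv Y) (adm_steps Y).
Proof.
elim: Y => //= A IHA B IHB; rewrite !all_cat; apply/and3P; split.
- by case: A {IHA} => //= S0 C; apply/eqP; lia.
- by apply/allP => _ /mapP [A' /(allP IHA) /eqP HA ->] /=; rewrite HA.
- by apply/allP => _ /mapP [B' /(allP IHB) /eqP HB ->] /=; rewrite HB.
Qed.

Lemma adm_nv Y Z : adm Y Z -> nv Z = nv Y.
Proof. by move=> h; apply/eqP; exact: (allP (adm_nv_all Y)). Qed.

Lemma le_nv X Y : le X Y -> nv Y = nv X.
Proof. by elim=> // X0 Y0 Z0 _ IH /adm_nv ->. Qed.

Lemma le_trans X Y Z : le X Y -> le Y Z -> le X Z.
Proof. move=> h1 h2; elim: h2 h1 => // Y0 Z0 W _ IH a h; exact: le_step (IH h) a. Qed.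

Lemma adm_BFl X Y Z : adm X Y -> adm (BF X Z) (BF Y Z).
Proof. by rewrite /adm /= => h; rewrite !mem_cat (map_f (fun A' => BF A' Z) h) orbT. Qed.
Lemma adm_BFr X Y Z : adm X Y -> adm (BF Z X) (BF Z Y).
Proof. by rewrite /adm /= => h; rewrite !mem_cat (map_f (fun B' => BF Z B') h) !orbT. Qed.

Lemma le_BFl X Y Z : le X Y -> le (BF X Z) (BF Y Z).
Proof. elim=> [?|????? a]; [exact: le_refl | exact: le_step (adm_BFl _ a)]. Qed.
Lemma le_BFr X Y Z : le X Y -> le (BF Z X) (BF Z Y).
Proof. elim=> [?|????? a]; [exact: le_refl | exact: le_step (adm_BFr _ a)]. Qed.
Lemma le_BF X Y X' Y' : le X X' -> le Y Y' -> le (BF X Y) (BF X' Y').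
Proof. move=> h1 h2; apply: le_trans (le_BFl _ h1) (le_BFr _ h2). Qed.

Lemma le_rot a b c : le (BF (BF a b) c) (BF a (BF b c)).
Proof. apply: le_step (le_refl _) _; by rewrite /adm /= inE eqxx. Qed.

Lemma adm_fone Y : ~~ adm Y fone.
Proof.
rewrite /adm; elim: Y => //= A _ B _; rewrite !mem_cat negb_or; apply/andP; split.
  by case: A.
by apply/negP => /orP [] /mapP [].
Qed.

Lemma le_fone K : le K fone -> K = fone.
Proof.
move e : fone => G h; elim: h e => // X Y Z _ _ a e; subst.
by move: (adm_fone Y); rewrite a.
Qed.

Lemma adm_BF_inv A1 B1 Z : adm (BF A1 B1) Z ->
  (exists S0 C, A1 = BF S0 C /\ Z = BF S0 (BF C B1)) \/
  (exists A', adm A1 A' /\ Z = BF A' B1) \/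
  (exists B', adm B1 B' /\ Z = BF A1 B').
Proof.
rewrite /adm /= !mem_cat => /or3P [].
- by case: A1 => //= S0 C; rewrite inE => /eqP ->; left; exists S0, C.
- by case/mapP => A' h ->; right; left; exists A'.
- by case/mapP => B' h ->; right; right; exists B'.
Qed.

Fixpoint ds (F : forest) : nat :=
  match F with fone => 0 | BF A B => ds A + nv A + ds B end.

Lemma adm_ds Y Z : adm Y Z -> ds Z < ds Y.
Proof.
elim: Y Z => [|A IHA B IHB] Z; first by [].
case/adm_BF_inv => [[S0 [C [-> ->]]] | [[A' [a ->]] | [B' [a ->]]]] /=.
- lia.
- by rewrite (adm_nv a); have := IHA _ a; lia.
- by have := IHB _ a; lia.
Qed.

Lemma le_ds X Y : le X Y -> X = Y \/ ds Y < ds X.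
Proof.
elim=> [?|X0 Y0 Z0 _ [<-|IH] a]; [by left| right; exact: adm_ds |].
by right; apply: ltn_trans (adm_ds a) IH.
Qed.

Fixpoint m_invol F : m (m F) = F.
Proof. by case: F => //= A B; rewrite !m_invol. Qed.

Fixpoint dec (K : forest) : seq (forest * forest) :=
  match K with
  | fone => [::]
  | BF L R => (L, R) :: [seq (p.1, BF p.2 R) | p <- dec L]
  end.

Lemma dec_le K p : p \in dec K -> le K (BF p.1 p.2).
Proof.
elim: K p => //= L IHL R _ p; rewrite inE => /orP [/eqP -> | /mapP [q hq ->]] /=.
  exact: le_refl.
exact: le_trans (le_BFl _ (IHL _ hq)) (le_rot _ _ _).
Qed.

Lemma dec_nv K p : p \in dec K -> nv p.1 < nv K.
Proof.
elim: K p => //= L IHL R _ p; rewrite inE => /orP [/eqP -> | /mapP [q hq ->]] /=.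
  lia.
have := IHL _ hq; lia.
Qed.

Lemma dec_uniq K : uniq [seq nv p.1 | p <- dec K].
Proof.
elim: K => //= L IHL R _; rewrite -map_comp /=.
have -> : [seq (nv \o fst) ((fun p : forest * forest => (p.1, BF p.2 R)) x) | x <- dec L]
   = [seq nv p.1 | p <- dec L] by apply: eq_map.
rewrite IHL andbT; apply/mapP => [[q hq]] => e; have := dec_nv hq; rewrite -e; lia.
Qed.

Lemma dec_trans K p q : p \in dec K -> q \in dec p.1 ->
  exists2 r, r \in dec K & r.1 = q.1 /\ le r.2 (BF q.2 p.2).
Proof.
elim: K p q => //= L IHL R _ p q; rewrite inE => /orP [/eqP -> | /mapP [s hs ->]] /= hq.
  exists (q.1, BF q.2 R); last by split => //; exact: le_refl.
  by rewrite inE; apply/orP; right; apply/mapP; exists q.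
have [r' hr' [e1 e2]] := IHL _ _ hs hq.
exists (r'.1, BF r'.2 R).
  by rewrite inE; apply/orP; right; apply/mapP; exists r'.
split => //=; exact: le_trans (le_BFl _ e2) (le_rot _ _ _).
Qed.

Lemma le_dec_gen n : forall A B, nv (BF A B) <= n -> forall K, le K (BF A B) ->
  exists2 p, p \in dec K & le p.1 A /\ le p.2 B.
Proof.
elim: n => [|n IHn] A B hG K h; first by [].
move e : (BF A B) h hG => G h hG; elim: h A B e hG => [X|X Y Z hXY IH a] A B e hZ.
  subst; exists (A, B); first by rewrite /= inE eqxx.
  by split; exact: le_refl.
subst.
have hY : nv Y <= n.+1 by rewrite -(adm_nv a).
case: Y a hXY hY IH => [|A1 B1] a hXY hY IH; first by [].
have {IH} [p hp [h1 h2]] := IH _ _ erefl hY.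
case/adm_BF_inv: a => [[S0 [C [e1 [e2 e3]]]] | [[A' [a [e2 e3]]] | [B' [a [e2 e3]]]]]; subst.
- have hSC : nv (BF S0 C) <= n by move: hY => /=; lia.
  have [q hq [h3 h4]] := IHn _ _ hSC _ h1.
  have [r hr [e1 e2]] := dec_trans hp hq.
  exists r => //; split; first by rewrite e1.
  exact: le_trans e2 (le_BF h4 h2).
- by exists p => //; split => //; exact: le_step h1 a.
- by exists p => //; split => //; exact: le_step h2 a.
Qed.

Lemma le_dec A B K : le K (BF A B) -> exists2 p, p \in dec K & le p.1 A /\ le p.2 B.
Proof. exact: (@le_dec_gen (nv (BF A B)) A B (leqnn _)). Qed.

Local Open Scope ring_scope.

Lemma sum_unique (R : nzRingType) (s : seq (forest * forest)) (t : _ -> R) c :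
  uniq [seq nv p.1 | p <- s] ->
  (forall p, p \in s -> t p = 0 \/ nv p.1 = c) ->
  (exists2 p, p \in s & nv p.1 = c /\ t p = 1) ->
  \sum_(p <- s) t p = 1.
Proof.
elim: s => [|x s IH] /=; first by move=> _ _ [].
move=> /andP [hx hu] h1 [p hp [hc ht]]; rewrite big_cons.
move: hp; rewrite inE => /orP [/eqP e | hp].
  subst p; rewrite ht big1_seq ?addr0 // => q /andP [_ hq].
  case: (h1 q (mem_behead (s:=x::s) hq)) => // e; exfalso; move/negP: hx; apply.
  by apply/mapP; exists q => //; rewrite hc e.
have tx : t x = 0.
  case: (h1 x (mem_head _ _)) => // e; exfalso; move/negP: hx; apply.
  by apply/mapP; exists p => //; rewrite hc e.
rewrite tx add0r; apply: IH => //.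
  by move=> q hq; apply: h1; rewrite inE hq orbT.
by exists p.
Qed.

Fixpoint Zf (R : nzRingType) (G K : forest) {struct G} : R :=
  match G with
  | fone => (K == fone)%:R
  | BF A B => \sum_(p <- dec K) Zf R A p.1 * Zf R B p.2
  end.

Lemma Zf_char (R : nzRingType) G : forall K,
  (le K G -> Zf R G K = 1) /\ (~ le K G -> Zf R G K = 0).
Proof.
elim: G => [|A IHA B IHB] K /=.
  split; first by move/le_fone ->; rewrite eqxx.
  by case: eqP => // ->; case; exact: le_refl.
split.
  move=> h; have [p0 hp0 [h1 h2]] := le_dec h.
  apply: (@sum_unique R _ _ (nv A) (dec_uniq K)).
    move=> p hp; case: (classic (le p.1 A)) => [l1|l1].
      by right; rewrite (le_nv l1).
    by left; rewrite ((IHA p.1).2 l1) mul0r.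
  exists p0 => //; split; first by rewrite (le_nv h1).
  by rewrite ((IHA _).1 h1) ((IHB _).1 h2) mulr1.
move=> h; rewrite big1_seq // => p /andP [_ hp].
case: (classic (le p.1 A)) => [l1|l1]; last by rewrite ((IHA p.1).2 l1) mul0r.
case: (classic (le p.2 B)) => [l2|l2]; last by rewrite ((IHB p.2).2 l2) mulr0.
by exfalso; apply: h; exact: le_trans (dec_le hp) (le_BF l1 l2).
Qed.


Section Lf.
Variables (R : fieldType) (T : choiceType).
Definition Lf (x : {malg R[T]}) (phi : T -> R) : R :=
  \sum_(k <- msupp x) x@_k * phi k.

Lemma LfW x phi (s : {fset T}) : (msupp x `<=` s)%fset ->
  Lf x phi = \sum_(k <- s) x@_k * phi k.
Proof.
move=> hs; rewrite /Lf; apply: big_fset_incl => // k _ hk.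
by rewrite mcoeff_outdom // mul0r.
Qed.

Lemma LfD x y phi : Lf (x + y) phi = Lf x phi + Lf y phi.
Proof.
rewrite (@LfW _ _ (msupp x `|` msupp y)%fset) ?msuppD_le //.
rewrite (@LfW x _ (msupp x `|` msupp y)%fset) ?fsubsetUl //.
rewrite (@LfW y _ (msupp x `|` msupp y)%fset) ?fsubsetUr //.
by rewrite -big_split /=; apply: eq_bigr => k _; rewrite mcoeffD mulrDl.
Qed.

Lemma LfN x phi : Lf (- x) phi = - Lf x phi.
Proof.
rewrite /Lf msuppN -sumrN; apply: eq_bigr => k _; by rewrite mcoeffN mulNr.
Qed.

Lemma LfB x y phi : Lf (x - y) phi = Lf x phi - Lf y phi.
Proof. by rewrite LfD LfN. Qed.

Lemma Lf0 phi : Lf 0 phi = 0.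
Proof. by rewrite /Lf msupp0 big_seq_fset0. Qed.

Lemma Lf_sum (I : Type) (r : seq I) (F : I -> {malg R[T]}) phi :
  Lf (\sum_(i <- r) F i) phi = \sum_(i <- r) Lf (F i) phi.
Proof.
elim: r => [|i r IH]; first by rewrite !big_nil Lf0.
by rewrite !big_cons LfD IH.
Qed.

Lemma LfU c k phi : Lf << c *g k >> phi = c * phi k.
Proof.
rewrite (@LfW _ _ [fset k]%fset) ?msuppU_le // big_seq_fset1; by rewrite mcoeffUU.
Qed.

Lemma LfZ c x phi : Lf (c *: x) phi = c * Lf x phi.
Proof.
rewrite (@LfW _ _ (msupp x)) ?msuppZ_le // /Lf mulr_sumr.
by apply: eq_bigr => k _; rewrite mcoeffZ mulrA.
Qed.

Lemma Lf_ext x phi psi : (forall k, phi k = psi k) -> Lf x phi = Lf x psi.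
Proof. by move=> h; apply: eq_bigr => k _; rewrite h. Qed.
End Lf.


Lemma Lf_sumU (R : fieldType) (T1 T2 : choiceType) (x : {malg R[T1]}) (f : T1 -> T2) phi :
  Lf (\sum_(p <- msupp x) << x@_p *g f p >>) phi = Lf x (fun p => phi (f p)).
Proof. rewrite Lf_sum; apply: eq_bigr => p _; exact: LfU. Qed.

Section Delta.
Variable R : fieldType.
Lemma Lf_DeltaBF A B (phi : forest * forest -> R) :
  Lf (DeltaF R (BF A B)) phi =
  Lf (DeltaF R B) (fun p => phi (BF A p.1, p.2)) +
  Lf (DeltaF R A) (fun p => phi (p.1, BF p.2 B)).
Proof.
change (DeltaF R (BF A B)) with (let t := Bplus A in
      let Dt : HH R := << (t, fone) >> +
        \sum_(p <- msupp (DeltaF R A)) << (DeltaF R A)@_p *g (p.1, Bplus p.2) >> in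
      \sum_(p <- msupp (DeltaF R B)) << (DeltaF R B)@_p *g (fcat t p.1, p.2) >>
      + \sum_(p <- msupp Dt) << Dt@_p *g (p.1, fcat p.2 B) >>
      - << (t, B) >>).
cbv zeta.
rewrite LfB LfD (Lf_sumU (DeltaF R B) (fun p => (fcat (Bplus A) p.1, p.2))).
rewrite (Lf_sumU _ (fun p => (p.1, fcat p.2 B))) LfD LfU.
rewrite (Lf_sumU (DeltaF R A) (fun p => (p.1, Bplus p.2))) LfU !mul1r.
by rewrite -addrA [_ + Lf (DeltaF R A) _]addrC addrK.
Qed.

Lemma Lf_Delta1 (phi : forest * forest -> R) : Lf (DeltaF R fone) phi = phi (fone, fone).
Proof. by rewrite [DeltaF R fone]/= LfU mul1r. Qed.

End Delta.

Section E.
Variable R : fieldType.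

Definition pt (h : forest -> R) (X : forest) : R :=
  if gammaF X is Some X2 then h X2 else 0.

Lemma Lf_zero (T : choiceType) (x : {malg R[T]}) : Lf x (fun _ => 0) = 0.
Proof. by rewrite /Lf big1 // => k _; rewrite mulr0. Qed.

Lemma Lf_counit X : forall f : forest -> R,
  Lf (DeltaF R X) (fun p => f p.1 * (p.2 == fone)%:R) = f X.
Proof.
elim: X => [|A IHA B IHB] f; first by rewrite Lf_Delta1 eqxx mulr1.
rewrite Lf_DeltaBF (IHB (fun Y => f (BF A Y))).
rewrite (@Lf_ext _ _ _ _ (fun _ => 0)) ?Lf_zero ?addr0 // => p.
by rewrite mulr0.
Qed.

Lemma Lf_main_ Hf : forall f h : forest -> R,
  Lf (DeltaF R Hf) (fun p => f p.1 * pt h p.2) =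
  \sum_(q <- dec (m Hf)) h (m q.1) * f (m q.2).
Proof.
elim: Hf => [|X IHX Y IHY] f h; first by rewrite Lf_Delta1 /= mulr0 big_nil.
rewrite Lf_DeltaBF (IHY (fun Z => f (BF X Z)) h).
rewrite (@Lf_ext _ _ _ _ (fun p => (f p.1 * h Y) * (p.2 == fone)%:R)); last first.
  by case=> p1 [|[|u v] w] /=; rewrite ?mulr0 ?mulr1 // mulr0.
rewrite (Lf_counit X (fun Z => f Z * h Y)) /= big_cons big_map !m_invol.
rewrite addrC mulrC; congr (_ + _); apply: eq_bigr => q _ /=.
by rewrite m_invol.
Qed.

Lemma Lf_main Hf (f h : forest -> R) :
  Lf (DeltaF R Hf) (fun p => f p.1 * pt h p.2) =
  \sum_(q <- dec (m Hf)) h (m q.1) * f (m q.2).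
Proof. exact: Lf_main_. Qed.
Lemma dec_fone Hf : forall g : forest -> R,
  \sum_(q <- dec (m Hf)) g q.1 * (q.2 == fone)%:R = pt (fun Z => g (m Z)) Hf.
Proof.
case: Hf => [|X Y] g; first by rewrite /= big_nil.
rewrite /= big_cons big_map big1 ?addr0 => [|q _]; last by rewrite /= mulr0.
by case: X => [|u v] /=; rewrite ?mulr1 ?mulr0.
Qed.

Lemma pairF_Zf G : forall Hf, pairF R G Hf = Zf R G (m Hf).
Proof.
elim: G => [|A IHA B IHB] Hf.
  by case: Hf.
rewrite [pairF R (BF A B) Hf]/=.
case: eqP => [->|nB].
  have -> : Zf R (BF A fone) (m Hf) =
     \sum_(q <- dec (m Hf)) Zf R A q.1 * (q.2 == fone)%:R by [].
  rewrite dec_fone /pt.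
  by case: Hf => [|[|u v] w] //=; rewrite IHA.
have -> : Zf R (BF A B) (m Hf) =
   \sum_(q <- dec (m Hf)) Zf R A q.1 * Zf R B q.2 by [].
transitivity (\sum_(q <- dec (m Hf)) pairF R A (m q.1) * pairF R B (m q.2)); last first.
  by apply: eq_bigr => q _; rewrite IHA IHB !m_invol.
rewrite -(@Lf_main Hf (pairF R B) (pairF R A)) /Lf.
apply: eq_bigr => p _; rewrite mulrA; congr (_ * _ * _).
Qed.
End E.

Lemma fle_le n (x y : Fn n) : fle x y -> le (ssval x) (ssval y).
Proof.
case/connectP => p; elim: p x => [|z p IH] x /=; first by move=> _ ->; exact: le_refl.
case/andP => a hp hy; apply: le_trans (IH _ hp hy).
exact: le_step (le_refl _) a.
Qed.

Lemma le_fle_gen n X Y : le X Y -> forall x y : Fn n, ssval x = X -> ssval y = Y -> fle x y.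
Proof.
elim=> [Z|X0 Y0 Z hXY IH a] x y ex ey.
  have -> : x = y by apply: val_inj; rewrite /= ex ey.
  exact: connect0.
have hY : Y0 \in forests n.
  by rewrite mem_forests -(adm_nv a) -ey -mem_forests (ssvalP y).
apply: connect_trans (IH x (SeqSub hY) ex erefl) _.
by apply: connect1; rewrite /adm /= ey.
Qed.

Lemma le_fle n (x y : Fn n) : le (ssval x) (ssval y) -> fle x y.
Proof. by move=> h; exact: le_fle_gen h _ _ erefl erefl. Qed.

Section Mob.
Variables (K : fieldType) (n : nat) (mu : Fn n -> Fn n -> K).
Hypothesis mu0 : forall G1 G2 : Fn n, ~~ fle G1 G2 -> mu G1 G2 = 0.
Hypothesis musum : forall G1 G3 : Fn n, fle G1 G3 ->
       \sum_(G2 : Fn n | fle G1 G2 && fle G2 G3) mu G1 G2 = (G1 == G3)%:R.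

Local Notation T := (Fn n).
Let ev (i : 'I_#|T|) : T := enum_val i.

Lemma left_inv (a b : T) : \sum_(x : T) mu a x * (fle x b)%:R = (a == b)%:R.
Proof.
have [ab|nab] := boolP (fle a b).
  rewrite -musum // [RHS]big_mkcond /=; apply: eq_bigr => x _.
  have [ax|nax] := boolP (fle a x); first by case: (fle x b); rewrite /= ?mulr1 ?mulr0.
  by rewrite mu0 // mul0r.
have -> : (a == b) = false by apply/negP => /eqP e; move: nab; rewrite e /fle connect0.
rewrite big1 // => x _; have [xb|] := boolP (fle x b); last by move=> _; rewrite mulr0.
have [ax|nax] := boolP (fle a x); last by rewrite mu0 // mul0r.
by move: nab; rewrite /fle (connect_trans ax xb).
Qed.

Lemma right_inv (a b : T) : \sum_(x : T) (fle a x)%:R * mu x b = (a == b)%:R.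
Proof.
pose Mz : 'M[K]_#|T| := \matrix_(i, j) (fle (ev i) (ev j))%:R.
pose Mm : 'M[K]_#|T| := \matrix_(i, j) mu (ev i) (ev j).
have h1 : Mm *m Mz = 1%:M.
  apply/matrixP => i j; rewrite !mxE.
  under eq_bigr do rewrite !mxE.
  rewrite -(big_enum_val (A := T) (fun x => mu (ev i) x * (fle x (ev j))%:R)) /=.
  by rewrite left_inv (inj_eq enum_val_inj).
have h2 := mulmx1C h1.
have := congr1 (fun M : 'M[K]_#|T| => M (enum_rank a) (enum_rank b)) h2.
rewrite /= !mxE (inj_eq enum_rank_inj) => <-.
under [RHS]eq_bigr do rewrite !mxE.
rewrite -(big_enum_val (A := T) (fun x => (fle (ev (enum_rank a)) x)%:R * mu x (ev (enum_rank b)))) /=.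
by rewrite /ev !enum_rankK.
Qed.
End Mob.

Lemma pairF_fle (K : fieldType) n (G g : Fn n) :
  pairF K (ssval G) (m (ssval g)) = (fle g G)%:R.
Proof.
rewrite pairF_Zf m_invol; have [h|h] := boolP (fle g G).
  exact: (Zf_char K _ _).1 (fle_le h).
by apply: (Zf_char K _ _).2 => /le_fle; rewrite (negbTE h).
Qed.

Lemma pairF_out (K : fieldType) n (G : Fn n) Gx :
  Gx \notin forests n -> pairF K (ssval G) Gx = 0.
Proof.
move=> hG; rewrite pairF_Zf; apply: (Zf_char K _ _).2 => /le_nv.
have := ssvalP G; rewrite !mem_forests nv_m => /eqP -> e.
by move: hG; rewrite mem_forests -e eqxx.
Qed.

Lemma mFn_inj n : injective (@mFn n).
Proof.
move=> x y e; apply: val_inj; have := congr1 (fun z => m (ssval z)) e.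
by rewrite /= !m_invol.
Qed.

Lemma pairH_Lf (K : fieldType) (x : H K) Gx : pairH x Gx = Lf x (fun F => pairF K F Gx).
Proof. by []. Qed.

Lemma Lf_bigsum (K : fieldType) (T : choiceType) (I : finType) (P : pred I)
  (Fm : I -> {malg K[T]}) phi :
  Lf (\sum_(i | P i) Fm i) phi = \sum_(i | P i) Lf (Fm i) phi.
Proof. exact: (big_morph (fun x => Lf x phi) (fun x y => LfD x y phi) (Lf0 phi)). Qed.


End Aux.
Import Aux.
Local Open Scope ring_scope.
Unset Implicit Arguments.
Import GRing.Theory.

Theorem corollary39 (K : fieldType) (n : nat) (F : Fn n)
    (mu : Fn n -> Fn n -> K)
    (mu0 : forall G1 G2 : Fn n, ~~ fle G1 G2 -> mu G1 G2 = 0)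
    (musum : forall G1 G3 : Fn n, fle G1 G3 ->
       \sum_(G2 : Fn n | fle G1 G2 && fle G2 G3) mu G1 G2 = (G1 == G3)%:R) :
  let S : H K := \sum_(G : Fn n | fle G (mFn F)) mu G (mFn F) *: << ssval G >> in
  (forall G : forest, pairH S G = (G == ssval F)%:R) /\
  (forall f : H K, (forall G : forest, pairH f G = (G == ssval F)%:R) -> f = S).
Proof.
move=> S.
have pS : forall Gx, pairH S Gx =
    \sum_(G : Fn n | fle G (mFn F)) mu G (mFn F) * pairF K (ssval G) Gx.
  move=> Gx; rewrite pairH_Lf /S Lf_bigsum; apply: eq_bigr => G _.
  by rewrite LfZ LfU mul1r.
have part1 : forall Gx, pairH S Gx = (Gx == ssval F)%:R.
  move=> Gx; rewrite pS; have [hG|hG] := boolP (Gx \in forests n); last first.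
    rewrite big1 => [|G _]; last by rewrite pairF_out // mulr0.
    case: eqP => // e; move: hG; rewrite e; by rewrite (ssvalP F).
  pose g : Fn n := SeqSub hG.
  have eg : Gx = m (ssval (mFn g)) by rewrite /= m_invol.
  transitivity (\sum_(G : Fn n) (fle (mFn g) G)%:R * mu G (mFn F)).
    rewrite big_mkcond /=; apply: eq_bigr => G _.
    rewrite eg pairF_fle mulrC; case: ifP => // h.
    by rewrite mu0 ?h // mulr0.
  rewrite (right_inv mu0 musum) (inj_eq (@mFn_inj n)).
  by rewrite -(inj_eq val_inj).
split => // f hf.
set g := f - S.
have hg : forall Gx, Lf g (fun F0 => pairF K F0 Gx) = 0.
  by move=> Gx; rewrite /g LfB -!pairH_Lf hf part1 subrr.
have hz : forall d k, (ds k < d)%N -> g@_k = 0.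
  elim => // d IH k hk.
  have := hg (m k).
  rewrite (@LfW _ _ _ _ (msupp g `|` [fset k])%fset) ?fsubsetUl //.
  rewrite (big_fsetD1 k) /=; last by rewrite in_fsetU in_fset1 eqxx orbT.
  rewrite pairF_Zf m_invol ((Zf_char K k k).1 (le_refl _)) mulr1.
  rewrite big1_seq ?addr0 // => i /andP [_ hi].
  move: hi; rewrite in_fsetD1 => /andP [ne _].
  rewrite pairF_Zf m_invol.
  case: (classic (le k i)) => [l|l]; last by rewrite ((Zf_char K i k).2 l) mulr0.
  case: (le_ds l) => [e|lt]; first by move: ne; rewrite e eqxx.
  by rewrite IH ?mul0r //; apply: leq_trans lt _; rewrite -ltnS.
apply/eqP; rewrite -subr_eq0; apply/eqP/malgP => k; rewrite mcoeff0.
exact: (hz _ k (ltnSn _)).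
Qed.
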